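(* Let $V$ be an $R$-module which admits an infinitesimal character (i.e., every element of the center $Z(R)$ acts on $V$ by a scalar), and let $w\in V$ be a nonzero Whittaker vector of type $\eta$. Then the submodule $Rw\subseteq V$ is irreducible.
   Context: Let $f\in\mathbb{C}[H]$ be a polynomial. $R=R(f)$ is the associative $\mathbb{C}$-algebra generated by $E,F,H$ with relations $EF-FE=f(H)$, $HE-EH=E$, $HF-FH=-F$. Let $R(E)=\mathbb{C}[E]$; $Z(R)$ is the center of $R$. Fix an algebra homomorphism $\eta:R(E)\to\mathbb{C}$ with $\eta(E)\neq 0$. A vector $w$ of an $R$-module is a Whittaker vector of type $\eta$ if $Ew=\eta(E)w$. *)

(* Defs.v *)
From HB Require Import structures.
From mathcomp Require Import all_boot all_order all_algebra.
From mathcomp Require Import complex.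
From mathcomp Require Import Rstruct.
Set Implicit Arguments. Unset Strict Implicit. Unset Printing Implicit Defensive.
Import Order.TTheory GRing.Theory Num.Theory.
Local Open Scope ring_scope.

Definition C : Type := complex Rdefinitions.R.
HB.instance Definition _ := GRing.Field.on C.

(* Terms of the free associative C-algebra on E, F, H; every element of
   R(f) is the image of such a term. *)
Inductive rterm : Type :=
| tE | tF | tH
| tC of C
| tAdd of rterm & rterm
| tMul of rterm & rterm.

Section Action.
Variable V : lmodType C.
Variables (e fF h : V -> V).

Definition polyact (p : {poly C}) (v : V) : V :=
  \sum_(i < size p) p`_i *: iter i h v.

Fixpoint tact (t : rterm) (v : V) : V :=
  match t with
  | tE => e v
  | tF => fF v
  | tH => h v
  | tC c => c *: v
  | tAdd s u => tact s v + tact u v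
  | tMul s u => tact s (tact u v)
  end.
End Action.

Definition is_Rmod (f : {poly C}) (V : lmodType C) (e fF h : V -> V) : Prop :=
  linear e /\ linear fF /\ linear h /\
  forall v : V,
    [/\ e (fF v) - fF (e v) = polyact h f v,
        h (e v) - e (h v) = e v
      & h (fF v) - fF (h v) = - fF v].

(* The image of t in R(f) lies in the center Z(R(f)): it commutes with the
   generators E, F, H in R(f).  Since R(f) acts faithfully on itself, this is
   expressed as: t commutes with E, F, H in every R(f)-module. *)
Definition central (f : {poly C}) (t : rterm) : Prop :=
  forall (W : lmodType C) (e fF h : W -> W), is_Rmod f e fF h ->
    forall w : W,
      [/\ tact e fF h (tMul t tE) w = tact e fF h (tMul tE t) w,
          tact e fF h (tMul t tF) w = tact e fF h (tMul tF t) w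
        & tact e fF h (tMul t tH) w = tact e fF h (tMul tH t) w].

Definition has_inf_char (f : {poly C}) (V : lmodType C) (e fF h : V -> V) : Prop :=
  forall t, central f t -> exists c : C, forall v : V, tact e fF h t v = c *: v.

Definition is_submodule (V : lmodType C) (e fF h : V -> V) (S : V -> Prop) : Prop :=
  [/\ S 0,
      (forall x y, S x -> S y -> S (x + y)),
      (forall (c : C) x, S x -> S (c *: x)) &
      (forall x, S x -> [/\ S (e x), S (fF x) & S (h x)])].

Definition cyclic_sub (V : lmodType C) (e fF h : V -> V) (w : V) : V -> Prop :=
  fun v => exists t, v = tact e fF h t w.

Definition irreducible_sub (V : lmodType C) (e fF h : V -> V) (M : V -> Prop) : Prop :=
  (exists x, M x /\ x <> 0) /\
  forall S : V -> Prop, is_submodule e fF h S -> (forall x, S x -> M x) ->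
    (forall x, S x -> x = 0) \/ (forall x, M x -> S x).

(* Main.v *)
Require Import Defs.
From mathcomp Require Import all_boot all_order all_algebra complex Rstruct.
From mathcomp Require Import ring.
From Stdlib Require Import Classical.
Import GRing.Theory Num.Theory.
Set Implicit Arguments. Unset Strict Implicit. Unset Printing Implicit Defensive.
Local Open Scope ring_scope.

Section Lin.
Variable V : lmodType C.
Variable g : V -> V.
Hypothesis lg : linear g.
Lemma linD x y : g (x + y) = g x + g y.
Proof. by have := lg 1 x y; rewrite !scale1r. Qed.
Lemma lin0 : g 0 = 0.
Proof. have := linD 0 0; rewrite addr0 => H. by apply: (@addrI _ (g 0)); rewrite addr0 -H. Qed.
Lemma linZ a x : g (a *: x) = a *: g x.
Proof. by have := lg a x 0; rewrite !addr0 lin0 addr0. Qed.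
Lemma linN x : g (- x) = - g x.
Proof. by rewrite -scaleN1r linZ scaleN1r. Qed.
Lemma linB x y : g (x - y) = g x - g y.
Proof. by rewrite linD linN. Qed.
Lemma linS n (F : 'I_n -> V) : g (\sum_(i < n) F i) = \sum_(i < n) g (F i).
Proof. exact: (big_morph g linD lin0). Qed.
End Lin.

Section Ops.
Variable V : lmodType C.
Variables (e fF h : V -> V).
Hypothesis le : linear e.
Hypothesis lf : linear fF.
Hypothesis lh : linear h.

Local Notation P := (polyact h).

Lemma P_widen (p : {poly C}) n v : (size p <= n)%N -> P p v = \sum_(i < n) p`_i *: iter i h v.
Proof.
move=> Hn; rewrite /polyact (big_ord_widen n (fun i => p`_i *: iter i h v) Hn) big_mkcond.
apply: eq_bigr => i _; case: ifP => // /negbT; rewrite -leqNgt => Hi.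
by rewrite nth_default // scale0r.
Qed.

Lemma P0 v : P 0 v = 0.
Proof. by rewrite /polyact size_poly0 big_ord0. Qed.

Lemma PD (p : {poly C}) q v : P (p + q) v = P p v + P q v.
Proof.
set n := maxn (size p) (size q).
rewrite !(P_widen (n:=n)) ?leq_maxl ?leq_maxr ?size_polyD // -big_split.
by apply: eq_bigr => i _; rewrite coefD scalerDl.
Qed.

Lemma PZ c (p : {poly C}) v : P (c *: p) v = c *: P p v.
Proof.
rewrite !(P_widen (n:=size p)) ?size_scale_leq // scaler_sumr.
by apply: eq_bigr => i _; rewrite coefZ scalerA.
Qed.

Lemma PN (p : {poly C}) v : P (- p) v = - P p v.
Proof. by rewrite -(scaleN1r p) PZ scaleN1r. Qed.

Lemma PB (p : {poly C}) q v : P (p - q) v = P p v - P q v.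
Proof. by rewrite PD PN. Qed.

Lemma PC c v : P c%:P v = c *: v.
Proof.
rewrite (P_widen (n:=1)) ?size_polyC ?leq_b1 // big_ord1 coefC /=. done.
Qed.

Lemma iter_lin i : linear (iter i h).
Proof.
elim: i => [|i IH] a x y //=.
by rewrite IH (linD lh) (linZ lh).
Qed.

Lemma PvD (p : {poly C}) x y : P p (x + y) = P p x + P p y.
Proof.
rewrite /polyact -big_split; apply: eq_bigr => i _.
by rewrite (linD (iter_lin i)) scalerDr.
Qed.

Lemma PvZ (p : {poly C}) a x : P p (a *: x) = a *: P p x.
Proof.
rewrite /polyact scaler_sumr; apply: eq_bigr => i _.
by rewrite (linZ (iter_lin i)) !scalerA mulrC.
Qed.

Lemma Pv0 (p : {poly C}) : P p 0 = 0.
Proof. by have := PvZ p 0 0; rewrite !scale0r. Qed.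

Lemma PX (p : {poly C}) v : P (p * 'X) v = h (P p v).
Proof.
have Hs : (size (p * 'X)%R <= (size p).+1)%N.
  have [->|pn0] := eqVneq p 0; first by rewrite mul0r size_poly0.
  by rewrite size_mulX.
rewrite (P_widen v Hs) big_ord_recl coefMX /= scale0r add0r.
rewrite /polyact (linS lh); apply: eq_bigr => i _.
by rewrite coefMX /= (linZ lh).
Qed.

Lemma PH (p : {poly C}) c v : P (p * 'X + c%:P) v = h (P p v) + c *: v.
Proof. by rewrite PD PX PC. Qed.

Lemma P1 v : P 1 v = v.
Proof. by rewrite -polyC1 PC scale1r. Qed.

Lemma PM (p : {poly C}) q v : P (p * q) v = P p (P q v).
Proof.
elim/poly_ind: p => [|p c IH]; first by rewrite mul0r !P0.
rewrite mulrDl -mulrA (mulrC 'X) mulrA mul_polyC PD PX PZ IH.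
by rewrite PH.
Qed.

Lemma P_h (p : {poly C}) v : P p (h v) = h (P p v).
Proof.
elim/poly_ind: p => [|p c IH]; first by rewrite !P0 (lin0 lh).
by rewrite !PH IH (linD lh) (linZ lh).
Qed.

Hypothesis relE : forall v, h (e v) - e (h v) = e v.
Hypothesis relF : forall v, h (fF v) - fF (h v) = - fF v.

Lemma ehE v : e (h v) = h (e v) - e v.
Proof. by rewrite -{2}(relE v) opprB addrC subrK. Qed.

Lemma fhE v : fF (h v) = h (fF v) + fF v.
Proof. by rewrite -[X in _ = _ + X]opprK -(relF v) opprB addrC subrK. Qed.

Lemma P_e (p : {poly C}) v : e (P p v) = P (p \Po ('X - 1)) (e v).
Proof.
elim/poly_ind: p => [|p c IH]; first by rewrite comp_poly0 !P0 (lin0 le).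
rewrite comp_polyD comp_polyM comp_polyX comp_polyC mulrBr mulr1.
rewrite PH (linD le) (linZ le) ehE IH addrAC PD PB PX PC.
by rewrite addrAC.
Qed.

Lemma P_f (p : {poly C}) v : fF (P p v) = P (p \Po ('X + 1)) (fF v).
Proof.
elim/poly_ind: p => [|p c IH]; first by rewrite comp_poly0 !P0 (lin0 lf).
rewrite comp_polyD comp_polyM comp_polyX comp_polyC mulrDr mulr1.
rewrite PH (linD lf) (linZ lf) fhE IH !PD PX PC.
done.
Qed.
End Ops.

Definition Dl (p : {poly C}) : {poly C} := p - (p \Po ('X - 1)).

Fixpoint Bp (m : nat) : {poly C} :=
  if m is m'.+1 then Bp m' * ('X + (m'%:R)%:P) else 1.

Lemma Bp_monic m : Bp m \is monic.
Proof. elim: m => [|m IH] /=; first exact: monic1. by rewrite monicMr ?monicXaddC. Qed.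

Lemma Bp_size m : size (Bp m) = m.+1.
Proof.
elim: m => [|m IH] /=; first by rewrite size_poly1.
by rewrite size_Mmonic ?monicXaddC ?monic_neq0 ?Bp_monic // IH size_XaddC addn2.
Qed.

Lemma Bp_lead m : (Bp m)`_m = 1.
Proof. by have /monicP := Bp_monic m; rewrite /lead_coef Bp_size. Qed.

Lemma Bp_shift m : Bp m.+1 \Po ('X - 1) = ('X - 1) * Bp m.
Proof.
elim: m => [|m IH].
  rewrite /= comp_polyM comp_polyD comp_polyX comp_polyC mul1r mulr1 /=; rewrite ?polyC0 ?addr0. by rewrite comp_poly0 addr0.
rewrite [Bp m.+2]/= comp_polyM IH comp_polyD comp_polyX comp_polyC /=.
rewrite mulrS polyCD polyC1. ring.
Qed.

Lemma Dl_Bp m : Dl (Bp m.+1) = (m.+1)%:R *: Bp m.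
Proof.
rewrite /Dl Bp_shift [Bp m.+1]/= -mul_polyC mulrS polyCD polyC1. ring.
Qed.

Lemma DlD p q : Dl (p + q) = Dl p + Dl q.
Proof. rewrite /Dl comp_polyD. ring. Qed.

Lemma DlZ c p : Dl (c *: p) = c *: Dl p.
Proof. by rewrite /Dl comp_polyZ scalerBr. Qed.

Lemma DlC c : Dl c%:P = 0.
Proof. by rewrite /Dl comp_polyC subrr. Qed.

Lemma decomp n (p : {poly C}) : (size p <= n.+1)%N ->
  exists2 r, p = p`_n *: Bp n + r & (size r <= n)%N.
Proof.
move=> Hs; exists (p - p`_n *: Bp n); first by rewrite addrC subrK.
apply/leq_sizeP => j Hj; rewrite coefB coefZ.
move: Hj; rewrite leq_eqVlt => /orP [/eqP <-|Hj]; first by rewrite Bp_lead mulr1 subrr.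
have HB : (size (Bp n) <= j)%N by rewrite Bp_size.
by rewrite (nth_default 0 (leq_trans Hs Hj)) (nth_default 0 HB) mulr0 subrr.
Qed.

Lemma antidiff n (g : {poly C}) : (size g <= n)%N -> exists U, Dl U = g.
Proof.
elim: n g => [|n IH] g Hs.
  by exists 0; move: Hs; rewrite size_poly_leq0 => /eqP ->; rewrite /Dl comp_poly0 subrr.
have [r -> Hr] := decomp Hs.
have [U' HU'] := IH r Hr.
exists (U' + (g`_n / (n.+1)%:R) *: Bp n.+1).
rewrite DlD DlZ Dl_Bp HU' scalerA divfK; first by rewrite addrC.
by rewrite pnatr_eq0.
Qed.

Lemma Dl_size n (p : {poly C}) : (size p <= n.+1)%N -> (size (Dl p) <= n)%N.
Proof.
elim: n p => [|n IH] p Hs.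
  by rewrite (size1_polyC Hs) DlC size_poly0.
have [r -> Hr] := decomp Hs.
rewrite DlD DlZ Dl_Bp scalerA (leq_trans (size_polyD _ _)) // geq_max.
rewrite (leq_trans (size_scale_leq _ _)) ?Bp_size //.
by rewrite (leq_trans (IH _ Hr)).
Qed.

Lemma Dl_neq0 n (p : {poly C}) : size p = n.+2 -> Dl p != 0.
Proof.
move=> Hs.
have Hl : p`_n.+1 != 0.
  have := lead_coef_eq0 p; rewrite /lead_coef Hs /= => ->.
  by rewrite -size_poly_eq0 Hs.
have Hs2 : (size p <= n.+2)%N by rewrite Hs.
have [r Hp Hr] := decomp Hs2.
apply/eqP => H0.
have : (Dl p)`_n = 0 by rewrite H0 coef0.
rewrite Hp DlD DlZ Dl_Bp scalerA coefD coefZ Bp_lead mulr1.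
rewrite [X in _ + X]nth_default ?(Dl_size Hr) // addr0.
apply/eqP; rewrite mulf_eq0 negb_or Hl pnatr_eq0 //.
Qed.

Fixpoint hterm (s : seq C) : rterm :=
  match s with
  | [::] => tC 0
  | c :: s' => tAdd (tMul tH (hterm s')) (tC c)
  end.

Lemma hterm_act (V : lmodType C) (e fF h : V -> V) (lh : linear h) s v :
  tact e fF h (hterm s) v = polyact h (Poly s) v.
Proof.
elim: s => [|c s IH] /=; first by rewrite scale0r P0.
by rewrite IH cons_poly_def PH.
Qed.

Definition Omega (U : {poly C}) := tAdd (tMul tF tE) (hterm U).

Lemma compXm : ('X - 1) \Po ('X + 1) = 'X :> {poly C}.
Proof. by rewrite comp_polyB comp_polyX -polyC1 comp_polyC addrK. Qed.

Lemma Omega_central f U : Dl U = f -> central f (Omega U).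
Proof.
move=> HU W e fF h [le [lf [lh rel]]] w.
have relE : forall v, h (e v) - e (h v) = e v by move=> v; case: (rel v).
have relF : forall v, h (fF v) - fF (h v) = - fF v by move=> v; case: (rel v).
have efE : forall v, e (fF v) = fF (e v) + polyact h f v.
  by move=> v; case: (rel v) => H _ _; rewrite -H addrC subrK.
rewrite /= !hterm_act // polyseqK; split.
- rewrite (linD le) efE (P_e le lh relE) -HU /Dl PB.
  by rewrite -addrA subrK.
- rewrite efE (linD lf) (linD lf) -addrA; congr (_ + _).
  rewrite !(P_f lf lh relF) -PD; congr (polyact h _ _).
  by rewrite -HU /Dl comp_polyB -comp_polyA compXm comp_polyXr subrK.
- rewrite (ehE relE) (linB lf) (fhE relF) (P_h lh) (linD lh).
  by rewrite addrK.

Qed.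

Lemma sub_closed_all (V : lmodType C) (e fF h : V -> V) (S : V -> Prop) :
  is_submodule e fF h S -> forall t v, S v -> S (tact e fF h t v).
Proof.
case=> S0 SD SZ Sops; elim => [|||a|t1 IH1 t2 IH2|t1 IH1 t2 IH2] v Sv /=.
- by case: (Sops v Sv).
- by case: (Sops v Sv).
- by case: (Sops v Sv).
- exact: SZ.
- exact: SD (IH1 _ Sv) (IH2 _ Sv).
- exact: IH1 (IH2 _ Sv).
Qed.

Unset Implicit Arguments.
Theorem mainTheorem7 (f : {poly C}) (V : lmodType C) (e fF h : V -> V)
    (etaE : C) (w : V) :
  is_Rmod f e fF h ->
  has_inf_char f e fF h ->
  etaE != 0 ->
  w != 0 ->
  e w = etaE *: w ->
  irreducible_sub e fF h (cyclic_sub e fF h w).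
Proof.
move=> [le [lf [lh rel]]] Hinf eta0 w0 Ew.
have relE : forall v, h (e v) - e (h v) = e v by move=> v; case: (rel v).
have relF : forall v, h (fF v) - fF (h v) = - fF v by move=> v; case: (rel v).
have [U HU] := antidiff (leqnn (size f)).
have [c Hc] := Hinf _ (Omega_central HU).
have Fw : fF w = polyact h (etaE^-1 *: (c%:P - U)) w.
  have := Hc w; rewrite /= hterm_act // polyseqK Ew (linZ lf) => H.
  by rewrite PZ PB PC -H addrK scalerA mulVf // scale1r.
have Mpoly : forall t p, exists q, tact e fF h t (polyact h p w) = polyact h q w.
  elim => [|||a|t1 IH1 t2 IH2|t1 IH1 t2 IH2] p /=.
  - by exists (etaE *: (p \Po ('X - 1))); rewrite (P_e le lh relE) Ew (PvZ lh) PZ.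
  - by exists ((p \Po ('X + 1)) * (etaE^-1 *: (c%:P - U))); rewrite (P_f lf lh relF) Fw (PM lh).
  - by exists (p * 'X); rewrite (PX lh).
  - by exists (a *: p); rewrite PZ.
  - by have [q1 ->] := IH1 p; have [q2 ->] := IH2 p; exists (q1 + q2); rewrite PD.
  - by have [q2 ->] := IH2 p; have [q1 ->] := IH1 q2; exists q1.
split.
  by exists w; split; [exists (tC 1); rewrite /= scale1r | exact/eqP].
move=> S HS SM.
have [S0 SD SZ Sops] := HS.
case: (classic (exists x, S x /\ x <> 0)) => [[x [Sx xn0]]|Hno]; last first.
  by left => x Sx; apply: NNPP => xn; apply: Hno; exists x.
right.
have claim : forall d (p : {poly C}), (size p <= d)%N -> S (polyact h p w) -> polyact h p w <> 0 -> S w.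
  elim => [|d IH] q Hs Sq qn0.
    by move: Hs; rewrite size_poly_leq0 => /eqP qz; rewrite qz P0 in qn0.
  case: (leqP (size q) 1) => Hq1.
    rewrite (size1_polyC Hq1) PC in Sq qn0.
    have cn0 : q`_0 != 0 by apply/eqP => c0; apply: qn0; rewrite c0 scale0r.
    by have := SZ (q`_0)^-1 _ Sq; rewrite scalerA mulVf // scale1r.
  case Hn: (size q) Hq1 => [|[|n]] //= _.
  set y := e (polyact h q w) + (- etaE) *: polyact h q w.
  have Sy : S y by apply: SD; [case: (Sops _ Sq) | apply: SZ].
  have yE : y = polyact h ((- etaE) *: Dl q) w.
    rewrite /y (P_e le lh relE) Ew (PvZ lh) PZ /Dl PB scalerBr !scaleNr opprK.
    by rewrite addrC.
  have Hd : (size (Dl q) <= d)%N.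
    apply: (leq_trans (Dl_size (_ : size q <= n.+2)%N)); first by rewrite Hn.
    by rewrite -ltnS -Hn.
  case: (eqVneq y 0) => [y0|yn0].
    have PD0 : polyact h (Dl q) w = 0.
      move: y0; rewrite yE PZ => /eqP; rewrite GRing.scaler_eq0 oppr_eq0 (negbTE eta0) /=.
      by move/eqP.
    have Dn0 : Dl q != 0 := Dl_neq0 Hn.
    apply: (IH (q %% Dl q)).
    - by apply: leq_trans Hd; apply: ltnW; rewrite ltn_modp.
    - by rewrite {1}(divp_eq q (Dl q)) PD (PM lh) PD0 (Pv0 lh) add0r in Sq.
    - by rewrite {1}(divp_eq q (Dl q)) PD (PM lh) PD0 (Pv0 lh) add0r in qn0.
  apply: (IH ((- etaE) *: Dl q)).
  - exact: leq_trans (size_scale_leq _ _) Hd.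
  - by rewrite -yE.
  - by rewrite -yE; apply/eqP.
have Sw : S w.
  have [t xt] := SM x Sx.
  have [p xp] := Mpoly t 1.
  rewrite P1 in xp.
  by apply: (claim (size p) p (leqnn _)); rewrite -xp -xt.
by move=> y [t ->]; apply: sub_closed_all.
Qed.
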